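(* For every integer $r_3\geq 0$ there exists an integer $r_2^*\geq 0$ such that (1) for every integer $r_2\geq r_2^*$ there exists a graph with parameters $(r_2,r_3)$, and (2) for every integer $0\le r_2<r_2^*$ there exists no graph with parameters $(r_2,r_3)$.
   Context: All graphs are finite, simple and undirected. The $K_3$-degree of a vertex $v$ is the number of triangles containing $v$. A graph $G$ has parameters $(r_2,r_3)$ if every vertex has degree $r_2$ and every vertex has $K_3$-degree $r_3$. *)

(* Defs.v *)
From mathcomp Require Import all_boot.
Set Implicit Arguments. Unset Strict Implicit. Unset Printing Implicit Defensive.

Definition simple_graph (T : finType) (e : rel T) : Prop :=
  symmetric e /\ irreflexive e.

Definition deg (T : finType) (e : rel T) (v : T) : nat := #|[set w | e v w]|.

(* K3-degree of v: number of triangles containing v, i.e. number of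
   unordered pairs {u,w} of neighbours of v that are adjacent. *)
Definition k3deg (T : finType) (e : rel T) (v : T) : nat :=
  #|[set S : {set T} | [&& #|S| == 2, S \subset [set w | e v w]
        & [forall u in S, forall w in S, (u != w) ==> e u w]]]|.

Definition has_params (T : finType) (e : rel T) (r2 r3 : nat) : Prop :=
  forall v : T, deg e v = r2 /\ k3deg e v = r3.

(* there exists a (nonempty) finite simple graph with parameters (r2, r3);
   vertex set taken to be 'I_n, which covers all finite graphs up to iso. *)
Definition exists_graph (r2 r3 : nat) : Prop :=
  exists (n : nat) (e : rel 'I_n),
    0 < n /\ simple_graph e /\ has_params e r2 r3.

(* Main.v *)
Require Import Defs.
From mathcomp Require Import all_boot.
From Stdlib Require Import Classical.
Set Implicit Arguments. Unset Strict Implicit. Unset Printing Implicit Defensive.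

Definition P2 (T : finType) (e : rel T) (v : T) (S : {set T}) : bool :=
  [&& #|S| == 2, S \subset [set w | e v w]
        & [forall u in S, forall w in S, (u != w) ==> e u w]].

Lemma k3degE (T : finType) (e : rel T) v : k3deg e v = #|[set S | P2 e v S]|.
Proof. by []. Qed.

Section Img.
Variables (T1 T2 : finType) (f : T1 -> T2) (e1 : rel T1) (e2 : rel T2).
Hypothesis finj : injective f.
Hypothesis he : forall x y, e1 x y = e2 (f x) (f y).

Lemma P2_imset v (S : {set T1}) : P2 e2 (f v) (f @: S) = P2 e1 v S.
Proof.
rewrite /P2 (card_imset _ finj); congr (_ && (_ && _)).
- apply/subsetP/subsetP => H x.
  + by move=> xS; have := H (f x) (imset_f f xS); rewrite !inE -he.
  + by case/imsetP => y yS ->; have := H y yS; rewrite !inE -he.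
- apply/forall_inP/forall_inP => H u uS; apply/forall_inP => w wS.
  + have := forall_inP (H (f u) (imset_f f uS)) (f w) (imset_f f wS).
    by rewrite (inj_eq finj) -he.
  + case/imsetP: uS => u' u'S ->; case/imsetP: wS => w' w'S ->.
    by rewrite (inj_eq finj) -he; exact: (forall_inP (H u' u'S)) w' w'S.
Qed.

Lemma fam_image v :
  #|[set S | P2 e2 (f v) S && (S \subset f @: setT)]| = #|[set S | P2 e1 v S]|.
Proof.
rewrite -(card_imset _ (imset_inj finj)); apply: eq_card => S.
rewrite inE; apply/andP/imsetP.
- case=> HP Hsub.
  have ES : f @: (f @^-1: S) = S.
    apply/setP => x; apply/imsetP/idP => [[y]|xS]; first by rewrite inE => yS ->.
    case/imsetP: (subsetP Hsub x xS) => y _ Exy; exists y => //.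
    by rewrite inE -Exy.
  by exists (f @^-1: S); rewrite // inE -P2_imset ES.
- case=> S1; rewrite inE => HP ->; split; first by rewrite P2_imset.
  by apply: imsetS; apply: subsetT.
Qed.

Lemma deg_image v :
  #|[set w | e2 (f v) w & w \in f @: setT]| = deg e1 v.
Proof.
rewrite /deg -(card_imset _ finj); apply: eq_card => w.
rewrite !inE; apply/andP/imsetP.
- case=> H /imsetP [y _ Hy]; exists y => //; by rewrite inE he -Hy.
- case=> y; rewrite inE he => H ->; split => //; exact: imset_f.
Qed.
End Img.

Lemma card_split (T : finType) (P X Y : pred T) :
  (forall x, P x -> X x || Y x) -> (forall x, P x -> X x -> Y x -> False) ->
  #|[set x | P x]| = #|[set x | P x && X x]| + #|[set x | P x && Y x]|.
Proof.
move=> HU HI.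
have E : [set x | P x] = [set x | P x && X x] :|: [set x | P x && Y x].
  apply/setP => x; rewrite !inE; case Px: (P x) => //=; by rewrite HU.
have I : [set x | P x && X x] :&: [set x | P x && Y x] = set0.
  apply/setP => x; rewrite !inE; apply/negbTE/negP => /andP [/andP [Px Xx] /andP [_ Yx]].
  exact: (HI x Px Xx Yx).
by rewrite E cardsU I cards0 subn0.
Qed.

Section Prod.
Variables (T1 T2 : finType) (e1 : rel T1) (e2 : rel T2).
Hypotheses (s1 : simple_graph e1) (s2 : simple_graph e2).
Definition eprod : rel (T1 * T2) :=
  fun x y => (e1 x.1 y.1 && (x.2 == y.2)) || ((x.1 == y.1) && e2 x.2 y.2).

Lemma eprod_simple : simple_graph eprod.
Proof.
split.
- move=> x y; by rewrite /eprod (proj1 s1 x.1) (proj1 s2 x.2) eq_sym (eq_sym x.1).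
- by move=> x; rewrite /eprod (proj2 s1) (proj2 s2) andbF.
Qed.

Lemma deg_prod g h : deg eprod (g,h) = deg e1 g + deg e2 h.
Proof.
rewrite /deg.
have -> : [set w | eprod (g,h) w] =
   setX [set x | e1 g x] [set h] :|: setX [set g] [set y | e2 h y].
  by apply/setP => [[a b]]; rewrite !inE /eprod /= (eq_sym b) (eq_sym a).
rewrite cardsU !cardsX !cards1 muln1 mul1n.
rewrite (_ : _ :&: _ = set0) ?cards0 ?subn0 //.
apply/setP => [[a b]]; rewrite !inE /=.
by case: (a =P g) => [->|_]; rewrite ?(proj2 s1) ?andbF.
Qed.

Lemma k3_prod g h : k3deg eprod (g,h) = k3deg e1 g + k3deg e2 h.
Proof.
have injG : injective (fun x : T1 => (x, h)) by move=> x y [].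
have injH : injective (fun y : T2 => (g, y)) by move=> x y [].
have heG : forall x y, e1 x y = eprod (x, h) (y, h).
  by move=> x y; rewrite /eprod /= eqxx andbT (proj2 s2) andbF orbF.
have heH : forall x y, e2 x y = eprod (g, x) (g, y).
  by move=> x y; rewrite /eprod /= eqxx (proj2 s1).
have memG : forall s, (s \in [set (x, h) | x in [set: T1]]) = (s.2 == h).
  move=> s; apply/imsetP/eqP => [[x _ ->] //| E]; exists s.1; rewrite ?inE //.
  by case: s E => /= a b ->.
have memH : forall s, (s \in [set (g, y) | y in [set: T2]]) = (s.1 == g).
  move=> s; apply/imsetP/eqP => [[x _ ->] //| E]; exists s.2; rewrite ?inE //.
  by case: s E => /= a b ->.
rewrite !k3degE -(fam_image injG heG g) -(fam_image injH heH h).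
apply: card_split.
- move=> S /and3P [/cards2P [a [b [ab ES]]] Hsub Hadj]; subst S.
  have Ha := subsetP Hsub a (set21 a b); have Hb := subsetP Hsub b (set22 a b).
  have Hab := implyP (forall_inP (forall_inP Hadj a (set21 a b)) b (set22 a b)) ab.
  rewrite !subUset !sub1set !memG !memH.
  move: Ha Hb Hab ab; clear Hsub Hadj; rewrite !inE; case: a => [a1 a2]; case: b => [b1 b2].
  rewrite /eprod /=.
  case/orP => [/andP [Ha /eqP <-] | /andP [/eqP <- Ha]];
  case/orP => [/andP [Hb /eqP <-] | /andP [/eqP <- Hb]]; rewrite ?eqxx ?orbT //.
  + case/orP => [/andP [_ /eqP E] | /andP [/eqP E _]].
      by rewrite -E (proj2 s2) in Hb.
    by rewrite E (proj2 s1) in Ha.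
  + case/orP => [/andP [_ /eqP E] | /andP [/eqP E _]].
      by rewrite E (proj2 s2) in Ha.
    by rewrite -E (proj2 s1) in Hb.
- move=> S /and3P [/eqP c2 Hsub _] X Y.
  have : 0 < #|S| by rewrite c2.
  rewrite card_gt0 => /set0Pn [s sS].
  have := subsetP X s sS; have := subsetP Y s sS; have := subsetP Hsub s sS.
  rewrite inE memG memH; case: s sS => s1' s2' _ /=.
  rewrite /eprod /= => + /eqP E1 /eqP E2; rewrite E1 E2 (proj2 s1) (proj2 s2) andbF. by [].
Qed.
End Prod.

Definition Kn n : rel 'I_n := fun x y => x != y.

Lemma Kn_simple n : simple_graph (@Kn n).
Proof. by split => [x y|x]; rewrite /Kn; [rewrite eq_sym | rewrite eqxx]. Qed.

Lemma Kn_N n (v : 'I_n) : [set w | Kn v w] = [set~ v].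
Proof. by apply/setP => w; rewrite !inE /Kn eq_sym. Qed.

Lemma Kn_deg n (v : 'I_n) : deg (@Kn n) v = n.-1.
Proof. by rewrite /deg Kn_N cardsC1 card_ord. Qed.

Lemma k3_small (T : finType) (e : rel T) v : deg e v < 2 -> k3deg e v = 0.
Proof.
move=> d2; rewrite k3degE; apply/eqP; rewrite cards_eq0; apply/eqP/setP => S.
rewrite !inE; apply/negbTE/negP => /and3P [/eqP c2 Hs _].
have := subset_leq_card Hs; rewrite c2 => le.
by rewrite /deg ltnNge le in d2.
Qed.

Lemma K3_k3 (v : 'I_3) : k3deg (@Kn 3) v = 1.
Proof.
rewrite k3degE.
have -> : [set S | P2 (@Kn 3) v S] = [set [set~ v]]; last by rewrite cards1.
apply/setP => S; rewrite !inE /P2 Kn_N; apply/idP/eqP.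
- case/and3P => /eqP c2 Hs _; apply/eqP; by rewrite eqEcard Hs cardsC1 card_ord c2.
- move=> ->; rewrite cardsC1 card_ord subxx /=.
  by apply/forall_inP => u _; apply/forall_inP => w _; exact/implyP.
Qed.

Definition exT (r2 r3 : nat) : Prop :=
  exists (T : finType) (e : rel T), 0 < #|T| /\ simple_graph e /\ has_params e r2 r3.

Lemma exT_graph r2 r3 : exT r2 r3 -> exists_graph r2 r3.
Proof.
case=> T [e [pos [[sy ir] hp]]].
pose f : 'I_#|T| -> T := enum_val.
exists #|T|, (fun i j => e (f i) (f j)).
have inj : injective f by apply: enum_val_inj.
have he : forall x y : 'I_#|T|, (fun i j => e (f i) (f j)) x y
   = e (f x) (f y) by [].
have surj : forall w, w \in [set f x | x in [set: 'I_#|T|]].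
  by move=> w; rewrite -(enum_rankK w); apply: imset_f; rewrite inE.
split => //; split.
  by split => [i j|i]; [exact: sy | exact: ir].
move=> i; have [d k] := hp (f i); split.
- rewrite -d -(deg_image inj he) /deg; apply: eq_card => w.
  by rewrite !inE surj andbT.
- rewrite -k !k3degE -(fam_image inj he); apply: eq_card => S.
  rewrite !inE (_ : S \subset _ = true) ?andbT //.
  by apply/subsetP => w _; exact: surj.
Qed.

Lemma graph_exT r2 r3 : exists_graph r2 r3 -> exT r2 r3.
Proof.
case=> n [e [pos [sg hp]]]; exists (ordinal n), e; by rewrite card_ord.
Qed.

Lemma exT_prod a b c d : exT a b -> exT c d -> exT (a + c) (b + d).
Proof.
case=> T1 [e1 [p1 [s1 h1]]] [T2 [e2 [p2 [s2 h2]]]].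
exists (T1 * T2)%type, (eprod e1 e2); split.
  by rewrite card_prod muln_gt0 p1 p2.
split; first exact: eprod_simple.
case=> g h; have [d1 k1] := h1 g; have [d2 k2] := h2 h.
by rewrite deg_prod // k3_prod // d1 d2 k1 k2.
Qed.

Lemma exKn n r3 : 0 < n -> (forall v : 'I_n, k3deg (@Kn n) v = r3) -> exT n.-1 r3.
Proof.
move=> pos hk; exists (ordinal n), (@Kn n); rewrite card_ord; split => //.
split; first exact: Kn_simple.
by move=> v; rewrite Kn_deg hk.
Qed.

Lemma exK1 : exT 0 0.
Proof. apply: (@exKn 1) => // v; apply: k3_small; by rewrite Kn_deg. Qed.
Lemma exK2 : exT 1 0.
Proof. apply: (@exKn 2) => // v; apply: k3_small; by rewrite Kn_deg. Qed.
Lemma exK3 : exT 2 1.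
Proof. apply: (@exKn 3) => // v; exact: K3_k3. Qed.

Lemma ex2k k : exT (2 * k) k.
Proof.
elim: k => [|k IH]; first exact: exK1.
have := exT_prod IH exK3.
by rewrite mulnS addnC addn1.
Qed.

Lemma exT_up r2 r3 m : exT r2 r3 -> r2 <= m -> exT m r3.
Proof.
move=> H; elim: m => [|m IH].
  by rewrite leqn0 => /eqP <-.
rewrite leq_eqVlt => /orP [/eqP <- //|lt].
have := exT_prod (IH lt) exK2; by rewrite addn1 addn0.
Qed.

Lemma min_exists (P : nat -> Prop) n : P n -> exists m, P m /\ forall k, k < m -> ~ P k.
Proof.
elim: n {-2}n (leqnn n) => [|n IH] j.
  rewrite leqn0 => /eqP -> P0; exists 0; split => // k.
rewrite leq_eqVlt => /orP [/eqP ->|lt] Pj; last exact: (IH j lt Pj).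
case: (classic (exists k, k < n.+1 /\ P k)) => [[k [lk Pk]]|nex].
  exact: (IH k lk Pk).
exists n.+1; split => // k lk Pk; apply: nex; by exists k.
Qed.

Theorem corollary4p3 (r3 : nat) :
  exists r2s : nat,
    (forall r2 : nat, r2s <= r2 -> exists_graph r2 r3) /\
    (forall r2 : nat, r2 < r2s -> ~ exists_graph r2 r3).
Proof.
have [m [Pm Hm]] := @min_exists (fun n => exists_graph n r3) _ (exT_graph (ex2k r3)).
exists m; split => // r2 le.
apply: exT_graph; apply: (exT_up (graph_exT Pm) le).
Qed.
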